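(* If a Turing degree $\mathbf d$ is loquaciously high for paths, then every $\Pi^1_1$ subset of $\omega$ is c.e. relative to $\mathbf d$, uniformly (given a $\Pi^1_1$ index for the set, one effectively obtains an index of a $\mathbf d$-c.e. enumeration of it).
   Context: Fix a standard effective listing $(T_e:e\in\omega)$ of all computable subtrees of $\omega^{<\omega}$. A degree $\mathbf d$ is loquaciously high for paths if there are $D\in\mathbf d$ and a Turing functional $\Phi$ such that $\Phi^D(e,n)$ converges for all $e,n$, and whenever $T_e$ is ill-founded (has an infinite path), the function $n\mapsto\Phi^D(e,n)$ is an infinite path through $T_e$. *)

(* Defs.v *)
From Stdlib Require Import Arith List.
Import ListNotations.

Fixpoint tri (n : nat) : nat := match n with 0 => 0 | S k => S k + tri k end.
Definition pair (x y : nat) : nat := tri (x + y) + y.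

(* Multi-argument functions are handled via the pairing function. *)
Inductive code : Type :=
  | cZero
  | cSucc
  | cId
  | cFst
  | cSnd
  | cOracle
  | cPair (f g : code)
  | cComp (f g : code)
  | cPrec (f g : code)         (* h <x,0> = f x ; h <x,y+1> = g <x,<y,h<x,y>>> *)
  | cMu (f : code).

Inductive eval (O : nat -> nat) : code -> nat -> nat -> Prop :=
  | evZero x : eval O cZero x 0
  | evSucc x : eval O cSucc x (S x)
  | evId x : eval O cId x x
  | evFst a b : eval O cFst (pair a b) a
  | evSnd a b : eval O cSnd (pair a b) b
  | evOracle x : eval O cOracle x (O x)
  | evPair f g x a b : eval O f x a -> eval O g x b -> eval O (cPair f g) x (pair a b)
  | evComp f g x y z : eval O g x y -> eval O f y z -> eval O (cComp f g) x z
  | evPrec0 f g x v : eval O f x v -> eval O (cPrec f g) (pair x 0) v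
  | evPrecS f g x y u v :
      eval O (cPrec f g) (pair x y) u -> eval O g (pair x (pair y u)) v ->
      eval O (cPrec f g) (pair x (S y)) v
  | evMu f x y :
      eval O f (pair x y) 0 ->
      (forall z, z < y -> exists w, eval O f (pair x z) (S w)) ->
      eval O (cMu f) x y.

Fixpoint encode (c : code) : nat :=
  match c with
  | cZero => pair 0 0
  | cSucc => pair 1 0
  | cId => pair 2 0
  | cFst => pair 3 0
  | cSnd => pair 4 0
  | cOracle => pair 5 0
  | cPair f g => pair 6 (pair (encode f) (encode g))
  | cComp f g => pair 7 (pair (encode f) (encode g))
  | cPrec f g => pair 8 (pair (encode f) (encode g))
  | cMu f => pair 9 (encode f)
  end.

(* Phi O e x v : the e-th oracle machine (Turing functional) with oracle O on
   input x halts with output v.  Numbers that encode no code denote the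
   everywhere-divergent functional. *)
Definition Phi (O : nat -> nat) (e x v : nat) : Prop :=
  exists c, encode c = e /\ eval O c x v.

Definition phi (e x v : nat) : Prop := Phi (fun _ => 0) e x v.

Definition chi (D : nat -> bool) : nat -> nat := fun n => if D n then 1 else 0.

Fixpoint code_seq (s : list nat) : nat :=
  match s with [] => 0 | a :: t => S (pair a (code_seq t)) end.

Definition restr (f : nat -> nat) (n : nat) : list nat := map f (seq 0 n).

Definition is_tree (T : list nat -> Prop) : Prop :=
  forall s t, T (s ++ t) -> T s.

Definition is_path (f : nat -> nat) (T : list nat -> Prop) : Prop :=
  forall n, T (restr f n).

Definition ill_founded (T : list nat -> Prop) : Prop := exists f, is_path f T.

(* The standard listing of computable trees: T_e = T when the e-th partial
   computable function is total and is the characteristic function of the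
   tree T (via the coding code_seq of strings). *)
Definition tree_index (e : nat) (T : list nat -> Prop) : Prop :=
  is_tree T /\
  forall s, (T s -> phi e (code_seq s) 1) /\ (~ T s -> phi e (code_seq s) 0).

(* Phi^D(e,n) is the functional with index i applied to <e,n>. *)
Definition loquacious_for_paths (D : nat -> bool) : Prop :=
  exists i : nat,
    (forall e n, exists v, Phi (chi D) i (pair e n) v) /\
    (forall e T, tree_index e T -> ill_founded T ->
       exists g : nat -> nat,
         (forall n, Phi (chi D) i (pair e n) (g n)) /\ is_path g T).

Definition Pi11 (e n : nat) : Prop := forall f : nat -> nat, exists v, Phi f e n v.

Definition W (D : nat -> bool) (k n : nat) : Prop := exists v, Phi (chi D) k n v.

(* Main.v *)
Require Import Defs.
From Stdlib Require Import Arith Lia List Bool FunctionalExtensionality IndefiniteDescription Classical.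
Import ListNotations.

Lemma tri_S k : tri (S k) = S k + tri k. Proof. reflexivity. Qed.
Lemma tri_le a b : a <= b -> tri a <= tri b.
Proof. induction 1; simpl; lia. Qed.

Lemma pair_inj a b c d : pair a b = pair c d -> a = c /\ b = d.
Proof.
  unfold pair. intros H.
  assert (a + b = c + d).
  { destruct (lt_eq_lt_dec (a+b) (c+d)) as [[Hl|He]|Hl]; auto.
    - pose proof (tri_le (S (a+b)) (c+d) Hl). rewrite tri_S in H0. lia.
    - pose proof (tri_le (S (c+d)) (a+b) Hl). rewrite tri_S in H0. lia. }
  rewrite H0 in H. lia.
Qed.

Fixpoint unpair (z : nat) : nat * nat :=
  match z with
  | 0 => (0, 0)
  | S z' => let (a, b) := unpair z' in
            match a with 0 => (S b, 0) | S a' => (a', S b) end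
  end.

Lemma unpair_spec z : pair (fst (unpair z)) (snd (unpair z)) = z.
Proof.
  induction z as [|z IH]; [reflexivity|].
  simpl. destruct (unpair z) as [a b]. simpl in *.
  destruct a as [|a']; unfold pair in *; simpl in *.
  - rewrite !Nat.add_0_r. lia.
  - replace (a' + S b) with (S (a'+b)) by lia. simpl. lia.
Qed.

Definition fs (z : nat) := fst (unpair z).
Definition sn (z : nat) := snd (unpair z).
Lemma fs_sn z : pair (fs z) (sn z) = z. Proof. apply unpair_spec. Qed.
Lemma fs_pair a b : fs (pair a b) = a.
Proof. pose proof (fs_sn (pair a b)). apply pair_inj in H. tauto. Qed.
Lemma sn_pair a b : sn (pair a b) = b.
Proof. pose proof (fs_sn (pair a b)). apply pair_inj in H. tauto. Qed.
Lemma pair_ge_r a b : b <= pair a b.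
Proof. unfold pair. lia. Qed.
Lemma pair_ge_l a b : a <= pair a b.
Proof. unfold pair. destruct (a+b) eqn:E. lia. simpl. lia. Qed.
Global Opaque pair.
Global Arguments fs : simpl never.
Global Arguments sn : simpl never.

Lemma encode_inj c d : encode c = encode d -> c = d.
Proof.
  revert d; induction c; destruct d; simpl; intro H;
  repeat match goal with
  | H : pair _ _ = pair _ _ |- _ => apply pair_inj in H; destruct H
  end; try discriminate; try reflexivity;
  try (f_equal; auto).
Qed.

(* custom induction principle with nested IH for mu *)
Fixpoint ev_ind2 (O : nat -> nat) (P : code -> nat -> nat -> Prop)
  (hZero : forall x, P cZero x 0)
  (hSucc : forall x, P cSucc x (S x))
  (hId : forall x, P cId x x)
  (hFst : forall a b, P cFst (pair a b) a)
  (hSnd : forall a b, P cSnd (pair a b) b)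
  (hOr : forall x, P cOracle x (O x))
  (hPair : forall f g x a b, eval O f x a -> P f x a -> eval O g x b -> P g x b -> P (cPair f g) x (pair a b))
  (hComp : forall f g x y z, eval O g x y -> P g x y -> eval O f y z -> P f y z -> P (cComp f g) x z)
  (hPrec0 : forall f g x v, eval O f x v -> P f x v -> P (cPrec f g) (pair x 0) v)
  (hPrecS : forall f g x y u v, eval O (cPrec f g) (pair x y) u -> P (cPrec f g) (pair x y) u ->
     eval O g (pair x (pair y u)) v -> P g (pair x (pair y u)) v -> P (cPrec f g) (pair x (S y)) v)
  (hMu : forall f x y, eval O f (pair x y) 0 -> P f (pair x y) 0 ->
     (forall z, z < y -> exists w, eval O f (pair x z) (S w) /\ P f (pair x z) (S w)) ->
     P (cMu f) x y)
  c x v (H : eval O c x v) {struct H} : P c x v.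
Proof.
  pose (rec := ev_ind2 O P hZero hSucc hId hFst hSnd hOr hPair hComp hPrec0 hPrecS hMu).
  destruct H.
  - apply hZero. - apply hSucc. - apply hId. - apply hFst. - apply hSnd. - apply hOr.
  - apply hPair; auto; apply rec; auto.
  - eapply hComp; eauto; apply rec; auto.
  - apply hPrec0; auto; apply rec; auto.
  - eapply hPrecS; eauto; apply rec; auto.
  - apply hMu; [exact H | exact (rec _ _ _ H) |]. intros z Hz. destruct (H0 z Hz) as [w Hw].
    exists w. split; [exact Hw | exact (rec _ _ _ Hw)].
Defined.

Ltac use_ih :=
  repeat match goal with
  | IH : forall v', eval ?O ?c ?x v' -> ?v = v', E : eval ?O ?c ?x ?w |- _ =>
      let h := fresh in pose proof (IH _ E) as h; clear E; subst
  end.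
Lemma eval_det O c x v : eval O c x v -> forall v', eval O c x v' -> v = v'.
Proof.
  intro H. induction H using ev_ind2; intros v' H'; inversion H'; subst;
  repeat match goal with
  | H : pair _ _ = pair _ _ |- _ => apply pair_inj in H; destruct H; subst
  | H : S _ = S _ |- _ => injection H; clear H; intros; subst
  end; try reflexivity; try discriminate; clear H'; use_ih; try reflexivity; auto.
  match goal with |- ?y = ?v' =>
  destruct (lt_eq_lt_dec y v') as [[Hl|He]|Hl]; auto end.
  - match goal with Hm : forall z, z < v' -> exists w, _ |- _ => destruct (Hm _ Hl) as [w Hw] end.
    use_ih. discriminate.
  - match goal with Hm : forall z, z < y -> exists w, _ /\ _ |- _ => destruct (Hm _ Hl) as [w [_ Hw]] end.
    match goal with E : eval _ _ _ 0 |- _ => apply Hw in E; discriminate end.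
Qed.

Inductive pr : Type :=
  | Z | Sc | I | Fs | Sn | Orc | Pr (f g : pr) | Cm (f g : pr) | Rc (f g : pr).

Fixpoint recf (F G : nat -> nat) (x y : nat) : nat :=
  match y with 0 => F x | S y' => G (pair x (pair y' (recf F G x y'))) end.

Fixpoint den (O : nat -> nat) (p : pr) (z : nat) : nat :=
  match p with
  | Z => 0 | Sc => S z | I => z | Fs => fs z | Sn => sn z | Orc => O z
  | Pr f g => pair (den O f z) (den O g z)
  | Cm f g => den O f (den O g z)
  | Rc f g => recf (den O f) (den O g) (fs z) (sn z)
  end.

Fixpoint toC (p : pr) : code :=
  match p with
  | Z => cZero | Sc => cSucc | I => cId | Fs => cFst | Sn => cSnd | Orc => cOracle
  | Pr f g => cPair (toC f) (toC g)
  | Cm f g => cComp (toC f) (toC g)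
  | Rc f g => cPrec (toC f) (toC g)
  end.

Lemma den_ok O p : forall z, eval O (toC p) z (den O p z).
Proof.
  induction p; intro z; simpl; try constructor; auto.
  - rewrite <- (fs_sn z) at 1. constructor.
  - rewrite <- (fs_sn z) at 1. constructor.
  - econstructor; eauto.
  - rewrite <- (fs_sn z) at 1. generalize (sn z) as y. intro y. induction y; simpl.
    + constructor; auto.
    + econstructor; eauto.
Qed.

Definition b2n (b : bool) : nat := if b then 1 else 0.
Definition n2b (n : nat) : bool := negb (n =? 0).
Lemma n2b_b2n b : n2b (b2n b) = b. Proof. destruct b; reflexivity. Qed.

Fixpoint exb (f : nat -> bool) (j : nat) : bool :=
  match j with 0 => false | S j' => exb f j' || f j' end.
Fixpoint allb (f : nat -> bool) (j : nat) : bool :=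
  match j with 0 => true | S j' => allb f j' && f j' end.

Lemma exb_ext f g j : (forall y, y < j -> f y = g y) -> exb f j = exb g j.
Proof. induction j; simpl; intros; auto. rewrite IHj, H; auto. Qed.
Lemma allb_ext f g j : (forall y, y < j -> f y = g y) -> allb f j = allb g j.
Proof. induction j; simpl; intros; auto. rewrite IHj, H; auto. Qed.
Lemma exb_spec f j : exb f j = true <-> exists y, y < j /\ f y = true.
Proof.
  induction j; simpl. split; [discriminate|intros [y [H _]]; lia].
  rewrite orb_true_iff, IHj. split.
  - intros [[y [H1 H2]]|H]; [exists y; split; auto; lia| exists j; auto].
  - intros [y [H1 H2]]. destruct (Nat.eq_dec y j); subst; auto. left; exists y; split; auto; lia.
Qed.
Lemma allb_spec f j : allb f j = true <-> forall y, y < j -> f y = true.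
Proof.
  induction j; simpl. split; auto; intros; lia.
  rewrite andb_true_iff, IHj. split.
  - intros [H1 H2] y Hy. destruct (Nat.eq_dec y j); subst; auto. apply H1; lia.
  - intros H; split; auto.
Qed.

Fixpoint Kn (n : nat) : pr := match n with 0 => Z | S n' => Cm Sc (Kn n') end.
Definition FST A := Cm Fs A.
Definition SND A := Cm Sn A.
Definition SUCC A := Cm Sc A.
Definition ITE C A B := Cm (Rc Sn (Cm Fs Fs)) (Pr (Pr A B) C).
Definition NOT A := ITE A Z (Kn 1).
Definition AND A B := ITE A (ITE B (Kn 1) Z) Z.
Definition OR A B := ITE A (Kn 1) (ITE B (Kn 1) Z).
Definition addp := Rc I (Cm Sc (Cm Sn Sn)).
Definition ADD A B := Cm addp (Pr A B).
Definition pdp := Cm (Rc Z (Cm Fs Sn)) (Pr Z I).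
Definition PRED A := Cm pdp A.
Definition subp := Rc I (Cm pdp (Cm Sn Sn)).
Definition SUB A B := Cm subp (Pr A B).
Definition EQ A B := NOT (ADD (SUB A B) (SUB B A)).
Definition LT A B := NOT (SUB (SUCC A) B).
Definition BEX P W J := Cm (Rc Z (OR (Cm Sn Sn) (Cm P (Pr Fs (Cm Fs Sn))))) (Pr W J).
Definition BALL P W J := Cm (Rc (Kn 1) (AND (Cm Sn Sn) (Cm P (Pr Fs (Cm Fs Sn))))) (Pr W J).
Definition itsnp := Rc I (Cm Sn (Cm Sn Sn)).
Definition ITSN L J := Cm itsnp (Pr L J).

Ltac dsimp := cbn [den recf]; repeat (rewrite fs_pair || rewrite sn_pair).

Lemma den_Cm (O : nat -> nat) f g z : den O (Cm f g) z = den O f (den O g z). Proof. reflexivity. Qed.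
Lemma den_Pr (O : nat -> nat) f g z : den O (Pr f g) z = pair (den O f z) (den O g z). Proof. reflexivity. Qed.
Lemma den_Rc (O : nat -> nat) f g x y : den O (Rc f g) (pair x y) = recf (den O f) (den O g) x y.
Proof. simpl. rewrite fs_pair, sn_pair. reflexivity. Qed.
Lemma den_Fs (O : nat -> nat) z : den O Fs z = fs z. Proof. reflexivity. Qed.
Lemma den_Sn (O : nat -> nat) z : den O Sn z = sn z. Proof. reflexivity. Qed.
Lemma den_I (O : nat -> nat) z : den O I z = z. Proof. reflexivity. Qed.
Lemma den_Kn (O : nat -> nat) n z : den O (Kn n) z = n. Proof. induction n; simpl; auto. Qed.
Lemma den_FST (O : nat -> nat) A z : den O (FST A) z = fs (den O A z). Proof. reflexivity. Qed.
Lemma den_SND (O : nat -> nat) A z : den O (SND A) z = sn (den O A z). Proof. reflexivity. Qed.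
Lemma den_SUCC (O : nat -> nat) A z : den O (SUCC A) z = S (den O A z). Proof. reflexivity. Qed.
Lemma recf_ext (O : nat -> nat) F G G' x y : (forall w, G w = G' w) -> recf F G x y = recf F G' x y.
Proof. intros H; induction y; simpl; congruence. Qed.
Lemma den_ITE (O : nat -> nat) C A B z : den O (ITE C A B) z =
  if n2b (den O C z) then den O A z else den O B z.
Proof. unfold ITE, n2b. dsimp. destruct (den O C z); dsimp; reflexivity. Qed.
Lemma den_NOT (O : nat -> nat) A z : den O (NOT A) z = b2n (negb (n2b (den O A z))).
Proof. unfold NOT. rewrite den_ITE. destruct (n2b _); reflexivity. Qed.
Lemma den_AND (O : nat -> nat) A B z : den O (AND A B) z = b2n (n2b (den O A z) && n2b (den O B z)).
Proof. unfold AND. rewrite !den_ITE. destruct (n2b _), (n2b _); reflexivity. Qed.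
Lemma den_OR (O : nat -> nat) A B z : den O (OR A B) z = b2n (n2b (den O A z) || n2b (den O B z)).
Proof. unfold OR. rewrite !den_ITE. destruct (n2b _), (n2b _); reflexivity. Qed.
Lemma den_ADD (O : nat -> nat) A B z : den O (ADD A B) z = den O A z + den O B z.
Proof.
  unfold ADD, addp. dsimp. generalize (den O A z) (den O B z). intros a b.
  induction b; dsimp; lia.
Qed.
Lemma den_PRED (O : nat -> nat) A z : den O (PRED A) z = pred (den O A z).
Proof. unfold PRED, pdp. dsimp. destruct (den O A z); dsimp; reflexivity. Qed.
Lemma den_SUB (O : nat -> nat) A B z : den O (SUB A B) z = den O A z - den O B z.
Proof.
  unfold SUB. change (den O (Cm subp (Pr A B)) z) with (den O subp (pair (den O A z) (den O B z))).
  generalize (den O A z) (den O B z). intros a b. unfold subp.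
  change (den O (Rc I (Cm pdp (Cm Sn Sn))) (pair a b)) with
    (recf (den O I) (den O (Cm pdp (Cm Sn Sn))) (fs (pair a b)) (sn (pair a b))).
  rewrite fs_pair, sn_pair.
  induction b; [simpl; lia|]. cbn [recf].
  change (den O (Cm pdp (Cm Sn Sn)) ?w) with (den O (PRED (Cm Sn Sn)) w).
  rewrite den_PRED. cbn [den]. rewrite !sn_pair. transitivity (pred (a - b)); [f_equal; exact IHb|lia].
Qed.
Lemma den_EQ (O : nat -> nat) A B z : den O (EQ A B) z = b2n (den O A z =? den O B z).
Proof.
  unfold EQ. rewrite den_NOT, den_ADD, !den_SUB. unfold n2b.
  destruct (Nat.eqb_spec (den O A z) (den O B z)).
  - rewrite e, Nat.sub_diag. reflexivity.
  - destruct (Nat.eqb_spec (den O A z - den O B z + (den O B z - den O A z)) 0); [lia|reflexivity].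
Qed.
Lemma den_LT (O : nat -> nat) A B z : den O (LT A B) z = b2n (den O A z <? den O B z).
Proof.
  unfold LT. rewrite den_NOT, den_SUB, den_SUCC. unfold n2b.
  destruct (Nat.ltb_spec (den O A z) (den O B z)).
  - replace (S (den O A z) - den O B z) with 0 by lia. reflexivity.
  - destruct (Nat.eqb_spec (S (den O A z) - den O B z) 0); [lia|reflexivity].
Qed.
Lemma den_BEX (O : nat -> nat) P W J z f :
  (forall y, y < den O J z -> den O P (pair (den O W z) y) = b2n (f y)) ->
  den O (BEX P W J) z = b2n (exb f (den O J z)).
Proof.
  intro H. unfold BEX. rewrite den_Cm, den_Pr, den_Rc.
  revert H. generalize (den O J z) as j. intros j H.
  induction j; cbn [recf exb]; [reflexivity|].
  rewrite den_OR, IHj by (intros; apply H; lia).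
  cbn [den]. repeat (rewrite sn_pair || rewrite fs_pair). rewrite n2b_b2n, H, n2b_b2n by lia. reflexivity.
Qed.
Lemma den_BALL (O : nat -> nat) P W J z f :
  (forall y, y < den O J z -> den O P (pair (den O W z) y) = b2n (f y)) ->
  den O (BALL P W J) z = b2n (allb f (den O J z)).
Proof.
  intro H. unfold BALL. rewrite den_Cm, den_Pr, den_Rc.
  revert H. generalize (den O J z) as j. intros j H.
  induction j; cbn [recf allb]; [apply den_Kn|].
  rewrite den_AND, IHj by (intros; apply H; lia).
  cbn [den]. repeat (rewrite sn_pair || rewrite fs_pair). rewrite n2b_b2n, H, n2b_b2n by lia. reflexivity.
Qed.
Lemma den_ITSN (O : nat -> nat) L J z : den O (ITSN L J) z = Nat.iter (den O J z) sn (den O L z).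
Proof.
  unfold ITSN, itsnp. rewrite den_Cm, den_Pr, den_Rc.
  generalize (den O J z). intro j. induction j; cbn [recf]; auto.
  rewrite IHj. cbn [den]. rewrite !sn_pair. reflexivity.
Qed.

Definition tln (z : nat) := sn (pred z).
Definition hdn (z : nat) := fs (pred z).
Definition itl (x s : nat) := Nat.iter x tln s.
Definition NODEf (L j : nat) := fs (Nat.iter j sn L).
Definition mkE c x v := pair 0 (pair c (pair x v)).
Definition mkW c := pair 1 (pair c 0).
Definition fl nd := fs nd.
Definition cd nd := fs (sn nd).
Definition xi nd := fs (sn (sn nd)).
Definition vl nd := sn (sn (sn nd)).

Definition memEb L j c x v := exb (fun j1 => NODEf L j1 =? mkE c x v) j.
Definition memWb L j c := exb (fun j1 => NODEf L j1 =? mkW c) j.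

Definition okb (s L j : nat) : bool :=
  let nd := NODEf L j in
  let c := cd nd in let x := xi nd in let v := vl nd in
  let t := fs c in let b := sn c in
  if n2b (fl nd) then
    ((t <? 6) && (b =? 0))
    || ((((t =? 6) || ((t =? 7) || (t =? 8))) && memWb L j (fs b) && memWb L j (sn b))
    || ((t =? 9) && memWb L j b))
  else if t =? 0 then (b =? 0) && (v =? 0)
  else if t =? 1 then (b =? 0) && (v =? S x)
  else if t =? 2 then (b =? 0) && (v =? x)
  else if t =? 3 then (b =? 0) && (v =? fs x)
  else if t =? 4 then (b =? 0) && (v =? sn x)
  else if t =? 5 then (b =? 0) && n2b (itl x s) && (v =? hdn (itl x s))
  else if t =? 6 then memEb L j (fs b) x (fs v) && memEb L j (sn b) x (sn v)
  else if t =? 7 then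
    exb (fun j1 => (NODEf L j1 =? mkE (sn b) x (vl (NODEf L j1)))
                   && memEb L j (fs b) (vl (NODEf L j1)) v) j
  else if t =? 8 then
    (if n2b (sn x) then
      exb (fun j1 => (NODEf L j1 =? mkE c (pair (fs x) (pred (sn x))) (vl (NODEf L j1)))
        && memEb L j (sn b) (pair (fs x) (pair (pred (sn x)) (vl (NODEf L j1)))) v) j
    else memEb L j (fs b) (fs x) v && memWb L j (sn b))
  else if t =? 9 then
    memEb L j b (pair x v) 0 &&
    allb (fun z => exb (fun j1 => (NODEf L j1 =? mkE b (pair x z) (vl (NODEf L j1)))
                                  && n2b (vl (NODEf L j1))) j) v
  else false.

Definition validb (s e n d : nat) : bool :=
  allb (fun j => okb s (sn d) j) (fs d) &&
  exb (fun j1 => NODEf (sn d) j1 =? mkE e n (vl (NODEf (sn d) j1))) (fs d).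

Definition inTb (e n s : nat) : bool := negb (exb (fun d => validb s e n d) (S s)).

Fixpoint tp (n k : nat) : pr :=
  match n with
  | 0 => I
  | S n' => if k =? n' then (match n' with 0 => I | _ => Sn end) else Cm (tp n' k) Fs
  end.
Definition tup2 a b := Pr a b.
Definition tup3 a b c := Pr (Pr a b) c.
Definition tup4 a b c d := Pr (Pr (Pr a b) c) d.
Definition tup5 a b c d e := Pr (Pr (Pr (Pr a b) c) d) e.
Definition tup6 a b c d e f := Pr (Pr (Pr (Pr (Pr a b) c) d) e) f.

Definition PAIR A B := Pr A B.
Definition NODE L J := FST (ITSN L J).
Definition MKE C X V := PAIR Z (PAIR C (PAIR X V)).
Definition MKW C := PAIR (Kn 1) (PAIR C Z).
Definition FL N := FST N.
Definition CD N := FST (SND N).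
Definition XI N := FST (SND (SND N)).
Definition VL N := SND (SND (SND N)).
Definition itlp := Rc I (Cm (Cm Sn pdp) (Cm Sn Sn)).
Definition ITL X S := Cm itlp (Pr S X).
Definition HD A := FST (PRED A).

(* W = (((L,c),x),v), input pair W j1 *)
Definition Pmeme := EQ (NODE (Cm (tp 4 0) Fs) Sn)
                       (MKE (Cm (tp 4 1) Fs) (Cm (tp 4 2) Fs) (Cm (tp 4 3) Fs)).
Definition MEME L J C X V := BEX Pmeme (tup4 L C X V) J.
Definition Pmemw := EQ (NODE (Cm (tp 2 0) Fs) Sn) (MKW (Cm (tp 2 1) Fs)).
Definition MEMW L J C := BEX Pmemw (tup2 L C) J.

(* case t=7: W = ((((L,j),b),x),v) *)
Definition P7 :=
  let L := Cm (tp 5 0) Fs in let j := Cm (tp 5 1) Fs in let b := Cm (tp 5 2) Fs in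
  let x := Cm (tp 5 3) Fs in let v := Cm (tp 5 4) Fs in
  let nd1 := NODE L Sn in
  AND (EQ nd1 (MKE (SND b) x (VL nd1))) (MEME L j (FST b) (VL nd1) v).
(* case t=8: W = (((((L,j),c),b),x),v) *)
Definition P8 :=
  let L := Cm (tp 6 0) Fs in let j := Cm (tp 6 1) Fs in let c := Cm (tp 6 2) Fs in
  let b := Cm (tp 6 3) Fs in let x := Cm (tp 6 4) Fs in let v := Cm (tp 6 5) Fs in
  let nd1 := NODE L Sn in
  AND (EQ nd1 (MKE c (PAIR (FST x) (PRED (SND x))) (VL nd1)))
      (MEME L j (SND b) (PAIR (FST x) (PAIR (PRED (SND x)) (VL nd1))) v).
(* case t=9 inner: input pair (pair W z) j1, W = (((L,j),b),x) *)
Definition P9i :=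
  let W := Cm Fs Fs in let z := Cm Sn Fs in
  let L := Cm (tp 4 0) W in let b := Cm (tp 4 2) W in let x := Cm (tp 4 3) W in
  let nd1 := NODE L Sn in
  AND (EQ nd1 (MKE b (PAIR x z) (VL nd1))) (VL nd1).
(* input pair W z *)
Definition P9 := BEX P9i I (Cm (tp 4 1) Fs).

(* OK body: input pair (pair s L) j *)
Definition OKB :=
  let s := Cm Fs Fs in let L := Cm Sn Fs in let j := Sn in
  let nd := NODE L j in
  let c := CD nd in let x := XI nd in let v := VL nd in
  let t := FST c in let b := SND c in
  ITE (FL nd)
    (OR (AND (LT t (Kn 6)) (EQ b Z))
     (OR (AND (AND (OR (EQ t (Kn 6)) (OR (EQ t (Kn 7)) (EQ t (Kn 8)))) (MEMW L j (FST b))) (MEMW L j (SND b)))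
         (AND (EQ t (Kn 9)) (MEMW L j b))))
  (ITE (EQ t Z) (AND (EQ b Z) (EQ v Z))
  (ITE (EQ t (Kn 1)) (AND (EQ b Z) (EQ v (SUCC x)))
  (ITE (EQ t (Kn 2)) (AND (EQ b Z) (EQ v x))
  (ITE (EQ t (Kn 3)) (AND (EQ b Z) (EQ v (FST x)))
  (ITE (EQ t (Kn 4)) (AND (EQ b Z) (EQ v (SND x)))
  (ITE (EQ t (Kn 5)) (AND (AND (EQ b Z) (ITL x s)) (EQ v (HD (ITL x s))))
  (ITE (EQ t (Kn 6)) (AND (MEME L j (FST b) x (FST v)) (MEME L j (SND b) x (SND v)))
  (ITE (EQ t (Kn 7)) (BEX P7 (tup5 L j b x v) j)
  (ITE (EQ t (Kn 8))
     (ITE (SND x) (BEX P8 (tup6 L j c b x v) j) (AND (MEME L j (FST b) (FST x) v) (MEMW L j (SND b))))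
  (ITE (EQ t (Kn 9)) (AND (MEME L j b (PAIR x v) Z) (BALL P9 (tup4 L j b x) v))
   Z)))))))))).

(* input pair z0 d, z0 = pair (pair e n) s *)
Definition PVALID :=
  let s := Cm Sn Fs in let e := Cm Fs (Cm Fs Fs) in let n := Cm Sn (Cm Fs Fs) in
  let d := Sn in
  AND (BALL OKB (PAIR s (SND d)) (FST d))
      (BEX (EQ (NODE (Cm (tp 3 0) Fs) Sn) (MKE (Cm (tp 3 1) Fs) (Cm (tp 3 2) Fs) (VL (NODE (Cm (tp 3 0) Fs) Sn))))
           (tup3 (SND d) e n) (FST d)).
(* input pair (pair e n) s *)
Definition T0 := NOT (BEX PVALID I (SUCC Sn)).

Lemma den_Z (O : nat -> nat) z : den O Z z = 0. Proof. reflexivity. Qed.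
Lemma den_PAIR (O : nat -> nat) A B z : den O (PAIR A B) z = pair (den O A z) (den O B z). Proof. reflexivity. Qed.
Lemma den_NODE (O : nat -> nat) L J z : den O (NODE L J) z = NODEf (den O L z) (den O J z).
Proof. unfold NODE. rewrite den_FST, den_ITSN. reflexivity. Qed.
Lemma den_MKE (O : nat -> nat) C X V z : den O (MKE C X V) z = mkE (den O C z) (den O X z) (den O V z).
Proof. reflexivity. Qed.
Lemma den_MKW (O : nat -> nat) C z : den O (MKW C) z = mkW (den O C z).
Proof. unfold MKW. rewrite den_PAIR, den_Kn. reflexivity. Qed.
Lemma den_FL (O : nat -> nat) N z : den O (FL N) z = fl (den O N z). Proof. reflexivity. Qed.
Lemma den_CD (O : nat -> nat) N z : den O (CD N) z = cd (den O N z). Proof. reflexivity. Qed.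
Lemma den_XI (O : nat -> nat) N z : den O (XI N) z = xi (den O N z). Proof. reflexivity. Qed.
Lemma den_VL (O : nat -> nat) N z : den O (VL N) z = vl (den O N z). Proof. reflexivity. Qed.
Lemma den_ITL (O : nat -> nat) X S z : den O (ITL X S) z = itl (den O X z) (den O S z).
Proof.
  unfold ITL, itlp. rewrite den_Cm, den_Pr, den_Rc. unfold itl.
  generalize (den O X z). intro j. induction j; cbn [recf]; auto.
  rewrite IHj. cbn [den]. rewrite !sn_pair.
  change (den O pdp ?w) with (den O (PRED I) w). rewrite den_PRED. reflexivity.
Qed.
Lemma den_HD (O : nat -> nat) A z : den O (HD A) z = hdn (den O A z).
Proof. unfold HD. rewrite den_FST, den_PRED. reflexivity. Qed.

Lemma b2n_if (c a b : bool) : b2n (if c then a else b) = if c then b2n a else b2n b.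
Proof. destruct c; reflexivity. Qed.

Ltac dstep :=
  first [ progress (cbn [tp Nat.eqb] ) | progress (unfold tup2, tup3, tup4, tup5, tup6) | progress (unfold P7, P8, P9, P9i)
        | rewrite den_NOT | rewrite den_AND | rewrite den_OR | rewrite den_ITE
        | rewrite den_EQ | rewrite den_LT | rewrite den_ADD | rewrite den_SUB
        | rewrite den_PRED | rewrite den_SUCC | rewrite den_Kn | rewrite den_Z
        | rewrite den_NODE | rewrite den_MKE | rewrite den_MKW | rewrite den_FL
        | rewrite den_CD | rewrite den_XI | rewrite den_VL | rewrite den_ITL | rewrite den_HD
        | rewrite den_PAIR | rewrite den_FST | rewrite den_SND | rewrite den_ITSN
        | rewrite den_Cm | rewrite den_Pr | rewrite den_Fs | rewrite den_Sn | rewrite den_I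
        | rewrite fs_pair | rewrite sn_pair | match goal with |- context [n2b (b2n ?b)] => rewrite (n2b_b2n b) end ].
Ltac dall := repeat dstep.

Lemma den_MEME (O : nat -> nat) L J C X V z :
  den O (MEME L J C X V) z = b2n (memEb (den O L z) (den O J z) (den O C z) (den O X z) (den O V z)).
Proof.
  unfold MEME. erewrite den_BEX. reflexivity.
  intros y _. unfold Pmeme. dall. reflexivity.
Qed.
Lemma den_MEMW O L J C z :
  den O (MEMW L J C) z = b2n (memWb (den O L z) (den O J z) (den O C z)).
Proof.
  unfold MEMW. erewrite den_BEX. reflexivity.
  intros y _. unfold Pmemw. dall. reflexivity.
Qed.

Ltac dstep2 :=
  first [ rewrite den_MEME | rewrite den_MEMW
        | erewrite den_BEX by (intros; match goal with |- _ = ?R => let RR := fresh "RR" in set (RR := R); repeat dstep2; unfold RR; reflexivity end)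
        | erewrite den_BALL by (intros; match goal with |- _ = ?R => let RR := fresh "RR" in set (RR := R); repeat dstep2; unfold RR; reflexivity end)
        | dstep ].
Ltac dall2 := repeat dstep2.

Lemma den_OKB O s L j : den O OKB (pair (pair s L) j) = b2n (okb s L j).
Proof.
  unfold OKB. rewrite den_ITE. dall2.
  unfold okb. cbv zeta. rewrite !b2n_if. reflexivity.
Qed.

Ltac dstep3 :=
  first [ rewrite den_OKB | rewrite den_MEME | rewrite den_MEMW
        | erewrite den_BEX by (intros; match goal with |- _ = ?R => let RR := fresh "RR" in set (RR := R); repeat dstep3; unfold RR; reflexivity end)
        | erewrite den_BALL by (intros; match goal with |- _ = ?R => let RR := fresh "RR" in set (RR := R); repeat dstep3; unfold RR; reflexivity end)
        | progress (unfold PVALID)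
        | dstep ].

Lemma den_T0 O e n s : den O T0 (pair (pair e n) s) = b2n (inTb e n s).
Proof.
  unfold T0. repeat dstep3. reflexivity.
Qed.

Definition okg (mem : (nat -> bool) -> bool) (s nd : nat) : bool :=
  let c := cd nd in let x := xi nd in let v := vl nd in
  let t := fs c in let b := sn c in
  let mE c' x' v' := mem (fun y => y =? mkE c' x' v') in
  let mW c' := mem (fun y => y =? mkW c') in
  if n2b (fl nd) then
    ((t <? 6) && (b =? 0))
    || ((((t =? 6) || ((t =? 7) || (t =? 8))) && mW (fs b) && mW (sn b))
    || ((t =? 9) && mW b))
  else if t =? 0 then (b =? 0) && (v =? 0)
  else if t =? 1 then (b =? 0) && (v =? S x)
  else if t =? 2 then (b =? 0) && (v =? x)
  else if t =? 3 then (b =? 0) && (v =? fs x)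
  else if t =? 4 then (b =? 0) && (v =? sn x)
  else if t =? 5 then (b =? 0) && n2b (itl x s) && (v =? hdn (itl x s))
  else if t =? 6 then mE (fs b) x (fs v) && mE (sn b) x (sn v)
  else if t =? 7 then
    mem (fun y => (y =? mkE (sn b) x (vl y)) && mE (fs b) (vl y) v)
  else if t =? 8 then
    (if n2b (sn x) then
      mem (fun y => (y =? mkE c (pair (fs x) (pred (sn x))) (vl y))
        && mE (sn b) (pair (fs x) (pair (pred (sn x)) (vl y))) v)
    else mE (fs b) (fs x) v && mW (sn b))
  else if t =? 9 then
    mE b (pair x v) 0 &&
    allb (fun z => mem (fun y => (y =? mkE b (pair x z) (vl y)) && n2b (vl y))) v
  else false.

Definition memN L j (P : nat -> bool) := exb (fun j1 => P (NODEf L j1)) j.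

Lemma okb_okg s L j : okb s L j = okg (memN L j) s (NODEf L j).
Proof. reflexivity. Qed.

Lemma memN_spec L j P : memN L j P = true <-> exists j1, j1 < j /\ P (NODEf L j1) = true.
Proof. unfold memN. apply exb_spec. Qed.

Lemma fs_sn_eq z : z = pair (fs z) (sn z). Proof. symmetry; apply fs_sn. Qed.
Lemma mkE_inv nd c x v : nd = mkE c x v -> fl nd = 0 /\ cd nd = c /\ xi nd = x /\ vl nd = v.
Proof. intros ->. unfold mkE, fl, cd, xi, vl. repeat (rewrite fs_pair || rewrite sn_pair). auto. Qed.
Lemma mkW_inv nd c : nd = mkW c -> fl nd = 1 /\ cd nd = c.
Proof. intros ->. unfold mkW, fl, cd. repeat (rewrite fs_pair || rewrite sn_pair). auto. Qed.

Lemma enc_tag cc : exists t b, encode cc = pair t b.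
Proof. destruct cc; simpl; eauto. Qed.

Lemma dec_prec cc B : encode cc = pair 8 B -> exists f g, cc = cPrec f g /\ encode f = fs B /\ encode g = sn B.
Proof.
  destruct cc; simpl; intro H; apply pair_inj in H; destruct H as [H1 H2]; try discriminate.
  exists cc1, cc2. subst. rewrite fs_pair, sn_pair. auto.
Qed.

Definition oracle_ok (O : nat -> nat) (s : nat) :=
  forall x, n2b (itl x s) = true -> O x = hdn (itl x s).

Definition claim O L j :=
  (fl (NODEf L j) <> 0 -> exists cc, encode cc = cd (NODEf L j)) /\
  (fl (NODEf L j) = 0 -> exists cc, encode cc = cd (NODEf L j) /\ eval O cc (xi (NODEf L j)) (vl (NODEf L j))).

Lemma n2b_true n : n2b n = true <-> n <> 0.
Proof. unfold n2b. destruct n; simpl; split; congruence. Qed.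
Lemma n2b_false n : n2b n = false <-> n = 0.
Proof. unfold n2b. destruct n; simpl; split; congruence. Qed.

Lemma memE_use O L j c x v :
  (forall j1, j1 < j -> claim O L j1) ->
  memN L j (fun y => y =? mkE c x v) = true -> exists cc, encode cc = c /\ eval O cc x v.
Proof.
  intros IH H. apply memN_spec in H. destruct H as [j1 [Hj1 H]]. apply Nat.eqb_eq in H.
  destruct (IH j1 Hj1) as [_ H2]. apply mkE_inv in H. destruct H as [H3 [H4 [H5 H6]]].
  rewrite <- H4, <- H5, <- H6. auto.
Qed.
Lemma memW_use O L j c :
  (forall j1, j1 < j -> claim O L j1) ->
  memN L j (fun y => y =? mkW c) = true -> exists cc, encode cc = c.
Proof.
  intros IH H. apply memN_spec in H. destruct H as [j1 [Hj1 H]]. apply Nat.eqb_eq in H.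
  destruct (IH j1 Hj1) as [H2 _]. apply mkW_inv in H. destruct H as [H3 H4].
  rewrite <- H4. apply H2. lia.
Qed.

Ltac bspl := repeat match goal with
  | H : (_ && _) = true |- _ => apply andb_true_iff in H; destruct H
  | H : (_ || _) = true |- _ => apply orb_true_iff in H; destruct H
  | H : (_ =? _) = true |- _ => apply Nat.eqb_eq in H
  | H : (_ <? _) = true |- _ => apply Nat.ltb_lt in H
  end.

Lemma sound_step O s L j :
  oracle_ok O s -> okb s L j = true ->
  (forall j1, j1 < j -> claim O L j1) -> claim O L j.
Proof.
  intros Hor H IH. rewrite okb_okg in H. unfold okg in H. unfold claim.
  set (nd := NODEf L j) in *. cbv zeta in H.
  set (c := cd nd) in *. set (x := xi nd) in *. set (v := vl nd) in *.
  assert (Hc : c = pair (fs c) (sn c)) by apply fs_sn_eq.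
  assert (Hb : sn c = pair (fs (sn c)) (sn (sn c))) by apply fs_sn_eq.
  destruct (n2b (fl nd)) eqn:Hf.
  - apply n2b_true in Hf. split; [intros _|intros; lia].
    apply orb_true_iff in H. destruct H as [H|H].
    + bspl. rewrite H0 in Hc.
      assert (fs c = 0 \/ fs c = 1 \/ fs c = 2 \/ fs c = 3 \/ fs c = 4 \/ fs c = 5) by lia.
      destruct H1 as [E|[E|[E|[E|[E|E]]]]]; rewrite E in Hc; rewrite Hc.
      exists cZero; reflexivity. exists cSucc; reflexivity. exists cId; reflexivity.
      exists cFst; reflexivity. exists cSnd; reflexivity. exists cOracle; reflexivity.
    + apply orb_true_iff in H. destruct H as [H|H].
      * apply andb_true_iff in H; destruct H as [H H2]. apply andb_true_iff in H; destruct H as [H H1].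
        apply (memW_use O) in H1; auto. apply (memW_use O) in H2; auto.
        destruct H1 as [f Hf1]; destruct H2 as [g Hg1].
        rewrite Hb, <- Hf1, <- Hg1 in Hc. rewrite Hc.
        bspl; match goal with E : fs c = _ |- _ => rewrite E end.
        exists (cPair f g); reflexivity. exists (cComp f g); reflexivity. exists (cPrec f g); reflexivity.
      * apply andb_true_iff in H; destruct H as [H H1]. apply Nat.eqb_eq in H.
        apply (memW_use O) in H1; auto. destruct H1 as [f Hf1].
        rewrite H, <- Hf1 in Hc. rewrite Hc. exists (cMu f); reflexivity.
  - apply n2b_false in Hf. split; [intros; lia| intros _].
    destruct (fs c =? 0) eqn:T0.
    { apply Nat.eqb_eq in T0. bspl. rewrite T0, H in Hc. rewrite H0, Hc.
      exists cZero. split; [reflexivity|constructor]. }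
    destruct (fs c =? 1) eqn:T1.
    { apply Nat.eqb_eq in T1. bspl. rewrite T1, H in Hc. rewrite H0, Hc.
      exists cSucc. split; [reflexivity|constructor]. }
    destruct (fs c =? 2) eqn:T2.
    { apply Nat.eqb_eq in T2. bspl. rewrite T2, H in Hc. rewrite H0, Hc.
      exists cId. split; [reflexivity|constructor]. }
    destruct (fs c =? 3) eqn:T3.
    { apply Nat.eqb_eq in T3. bspl. rewrite T3, H in Hc. rewrite H0, Hc.
      exists cFst. split; [reflexivity|]. rewrite (fs_sn_eq x) at 1. constructor. }
    destruct (fs c =? 4) eqn:T4.
    { apply Nat.eqb_eq in T4. bspl. rewrite T4, H in Hc. rewrite H0, Hc.
      exists cSnd. split; [reflexivity|]. rewrite (fs_sn_eq x) at 1. constructor. }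
    destruct (fs c =? 5) eqn:T5.
    { apply Nat.eqb_eq in T5. bspl. rewrite T5, H in Hc. rewrite H0, Hc.
      exists cOracle. split; [reflexivity|]. rewrite <- (Hor x H1). constructor. }
    destruct (fs c =? 6) eqn:T6.
    { apply Nat.eqb_eq in T6. bspl.
      apply (memE_use O) in H; auto. apply (memE_use O) in H0; auto.
      destruct H as [f [Hf1 Hf2]]; destruct H0 as [g [Hg1 Hg2]].
      exists (cPair f g). split.
      - simpl. rewrite Hf1, Hg1, <- Hb, <- T6. auto.
      - rewrite (fs_sn_eq v). constructor; auto. }
    destruct (fs c =? 7) eqn:T7.
    { apply Nat.eqb_eq in T7. apply memN_spec in H. destruct H as [j1 [Hj1 H]]. bspl.
      apply mkE_inv in H. destruct H as [E1 [E2 [E3 _]]].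
      destruct (IH j1 Hj1) as [_ C1]. destruct (C1 E1) as [g [Hg1 Hg2]].
      apply (memE_use O) in H0; auto. destruct H0 as [f [Hf1 Hf2]].
      exists (cComp f g). split.
      - simpl. rewrite Hf1, Hg1, E2, <- Hb, <- T7. auto.
      - econstructor. rewrite <- E3. exact Hg2. exact Hf2. }
    destruct (fs c =? 8) eqn:T8.
    { apply Nat.eqb_eq in T8. destruct (n2b (sn x)) eqn:Hsx.
      - apply n2b_true in Hsx.
        apply memN_spec in H. destruct H as [j1 [Hj1 H]]. bspl.
        apply mkE_inv in H. destruct H as [E1 [E2 [E3 _]]].
        destruct (IH j1 Hj1) as [_ C1]. destruct (C1 E1) as [cc [Hcc1 Hcc2]].
        apply (memE_use O) in H0; auto. destruct H0 as [g [Hg1 Hg2]].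
        rewrite E2, Hc, T8 in Hcc1. apply dec_prec in Hcc1. destruct Hcc1 as [f' [g' [-> [Hf' Hg']]]].
        assert (g' = g) by (apply encode_inj; congruence). subst g'.
        exists (cPrec f' g). split.
        + simpl. rewrite Hf', Hg1, <- fs_sn_eq, <- T8. symmetry; apply fs_sn_eq.
        + rewrite (fs_sn_eq x). replace (sn x) with (S (pred (sn x))) by lia.
          rewrite E3 in Hcc2. econstructor; eauto.
      - apply n2b_false in Hsx. bspl.
        apply (memE_use O) in H; auto. apply (memW_use O) in H0; auto.
        destruct H as [f [Hf1 Hf2]]; destruct H0 as [g Hg1].
        exists (cPrec f g). split.
        + simpl. rewrite Hf1, Hg1, <- Hb, <- T8. auto.
        + rewrite (fs_sn_eq x), Hsx. constructor; auto. }
    destruct (fs c =? 9) eqn:T9.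
    { apply Nat.eqb_eq in T9. bspl.
      apply (memE_use O) in H; auto. destruct H as [f [Hf1 Hf2]].
      exists (cMu f). split.
      - simpl. rewrite Hf1, <- T9. auto.
      - constructor; auto. intros z Hz. apply allb_spec with (y := z) in H0; auto.
        apply memN_spec in H0. destruct H0 as [j1 [Hj1 H]]. bspl.
        apply mkE_inv in H. destruct H as [E1 [E2 [E3 _]]].
        destruct (IH j1 Hj1) as [_ C1]. destruct (C1 E1) as [cc [Hcc1 Hcc2]].
        assert (cc = f) by (apply encode_inj; congruence). subst cc.
        apply n2b_true in H0. destruct (vl (NODEf L j1)) as [|w] eqn:Ew; [lia|].
        exists w. rewrite <- E3. exact Hcc2. }
    discriminate.
Qed.

Lemma sound_all O s L N : oracle_ok O s -> (forall j, j < N -> okb s L j = true) ->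
  forall j, j < N -> claim O L j.
Proof.
  intros Hor H j. induction j as [j IH] using (well_founded_induction lt_wf). intros Hj.
  apply sound_step with s; auto. intros j1 Hj1. apply IH; lia.
Qed.

Lemma valid_sound O s e n d : oracle_ok O s -> validb s e n d = true ->
  exists cc v, encode cc = e /\ eval O cc n v.
Proof.
  intros Hor H. unfold validb in H. apply andb_true_iff in H. destruct H as [H1 H2].
  rewrite allb_spec in H1. apply exb_spec in H2. destruct H2 as [j1 [Hj1 H2]].
  apply Nat.eqb_eq in H2. apply mkE_inv in H2. destruct H2 as [E1 [E2 [E3 _]]].
  destruct (sound_all O s (sn d) (fs d) Hor H1 j1 Hj1) as [_ C].
  destruct (C E1) as [cc [Hc1 Hc2]]. exists cc, (vl (NODEf (sn d) j1)). rewrite <- E2, <- E3. auto.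
Qed.

Lemma allb_mono (f g : nat -> bool) j : (forall z, f z = true -> g z = true) -> allb f j = true -> allb g j = true.
Proof. intros H. rewrite !allb_spec. auto. Qed.

Lemma okg_mono (mem mem' : (nat -> bool) -> bool) s nd :
  (forall P Q, (forall y, P y = true -> Q y = true) -> mem P = true -> mem' Q = true) ->
  okg mem s nd = true -> okg mem' s nd = true.
Proof.
  intros Hm. unfold okg; cbv zeta.
  repeat match goal with |- context [if ?b then _ else _] => destruct b end; auto; intro H;
  repeat (rewrite andb_true_iff in * || rewrite orb_true_iff in * ).
  all: assert (Hm' : forall P, mem P = true -> mem' P = true) by (intros P HP; eapply Hm; [|exact HP]; auto).
  all: try (intuition (eauto using allb_mono); fail).
  all: try (eapply Hm; [|eassumption]; intros y Hy; rewrite andb_true_iff in *; destruct Hy;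
            split; [assumption| eapply Hm; [|eassumption]; auto]; fail).
  all: destruct H as [H1 H2]; split; [auto|].
  all: eapply allb_mono; [|exact H2]; intros z Hz; auto.
Qed.

Definition encL (l : list nat) : nat := fold_right pair 0 l.
Definition okl s pre nd := okg (fun P => existsb P pre) s nd.
Definition listOK s l := forall j, j < length l -> okl s (firstn j l) (nth j l 0) = true.

Lemma pair00 : pair 0 0 = 0. Proof. Transparent pair. reflexivity. Opaque pair. Qed.
Lemma sn0 : sn 0 = 0. Proof. rewrite <- pair00. apply sn_pair. Qed.
Lemma fs0 : fs 0 = 0. Proof. rewrite <- pair00. apply fs_pair. Qed.

Lemma sn_encL l : sn (encL l) = encL (List.tl l).
Proof. destruct l; simpl. apply sn0. apply sn_pair. Qed.
Lemma fs_encL l : fs (encL l) = nth 0 l 0.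
Proof. destruct l; simpl. apply fs0. apply fs_pair. Qed.
Lemma skipn_S_tl j : forall (l : list nat), skipn (S j) l = List.tl (skipn j l).
Proof. induction j; intros [|a l]; simpl; auto. rewrite <- IHj. reflexivity. Qed.
Lemma iter_sn_encL j l : Nat.iter j sn (encL l) = encL (skipn j l).
Proof.
  induction j; [reflexivity|].
  change (Nat.iter (S j) sn (encL l)) with (sn (Nat.iter j sn (encL l))). rewrite IHj, sn_encL, skipn_S_tl. reflexivity.
Qed.
Lemma nth_skipn0 j : forall (l : list nat), nth 0 (skipn j l) 0 = nth j l 0.
Proof. induction j; intros [|a l]; simpl; auto. Qed.
Lemma NODE_encL l j : NODEf (encL l) j = nth j l 0.
Proof. unfold NODEf. rewrite iter_sn_encL, fs_encL, nth_skipn0. reflexivity. Qed.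

Lemma firstn_S_nth j (l : list nat) : j < length l -> firstn (S j) l = firstn j l ++ [nth j l 0].
Proof.
  revert l; induction j; intros [|a l] H; simpl in *; try lia; auto.
  rewrite IHj by lia. reflexivity.
Qed.
Lemma memN_list l j P : j <= length l -> memN (encL l) j P = existsb P (firstn j l).
Proof.
  induction j; intro H; [reflexivity|].
  unfold memN in *. cbn [exb]. rewrite IHj by lia. rewrite firstn_S_nth by lia.
  rewrite existsb_app, NODE_encL. simpl. rewrite orb_false_r. reflexivity.
Qed.
Lemma okb_list s l j : j < length l -> okb s (encL l) j = okl s (firstn j l) (nth j l 0).
Proof.
  intro H. rewrite okb_okg, NODE_encL. unfold okl. f_equal.
  extensionality P. apply memN_list. lia.
Qed.

Lemma existsb_mono (P Q : nat -> bool) pre pre' :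
  (forall y, P y = true -> Q y = true) -> (forall y, In y pre -> In y pre') ->
  existsb P pre = true -> existsb Q pre' = true.
Proof.
  intros H1 H2 H. apply existsb_exists in H. destruct H as [y [Hy HP]].
  apply existsb_exists. eauto.
Qed.
Lemma okl_mono s pre pre' nd : (forall y, In y pre -> In y pre') -> okl s pre nd = true -> okl s pre' nd = true.
Proof. intros H. apply okg_mono. intros P Q HPQ. apply existsb_mono; auto. Qed.

Lemma listOK_app s l1 l2 : listOK s l1 -> listOK s l2 -> listOK s (l1 ++ l2).
Proof.
  intros H1 H2 j Hj. rewrite length_app in Hj.
  destruct (lt_dec j (length l1)).
  - rewrite firstn_app, app_nth1 by auto. replace (j - length l1) with 0 by lia.
    rewrite firstn_O, app_nil_r. apply H1; auto.
  - rewrite firstn_app, app_nth2 by lia. rewrite firstn_all2 by lia.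
    apply okl_mono with (firstn (j - length l1) l2).
    + intros y Hy. apply in_or_app. right. auto.
    + apply H2. lia.
Qed.
Lemma listOK_snoc s l nd : listOK s l -> okl s l nd = true -> listOK s (l ++ [nd]).
Proof.
  intros H1 H2 j Hj. rewrite length_app in Hj. simpl in Hj.
  destruct (lt_dec j (length l)).
  - rewrite firstn_app, app_nth1 by auto. replace (j - length l) with 0 by lia.
    rewrite firstn_O, app_nil_r. apply H1; auto.
  - replace j with (length l) by lia. rewrite firstn_app, firstn_all, Nat.sub_diag, firstn_O, app_nil_r.
    rewrite app_nth2, Nat.sub_diag by lia. exact H2.
Qed.
Lemma listOK_nil s : listOK s []. Proof. intros j H. simpl in H. lia. Qed.

Lemma valid_complete s e n v l : listOK s l -> In (mkE e n v) l ->
  validb s e n (pair (length l) (encL l)) = true.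
Proof.
  intros H1 H2. unfold validb. rewrite fs_pair, sn_pair. apply andb_true_iff. split.
  - apply allb_spec. intros j Hj. rewrite okb_list by auto. apply H1; auto.
  - apply exb_spec. apply In_nth with (d := 0) in H2. destruct H2 as [j [Hj E]].
    exists j. split; auto. rewrite NODE_encL, E. apply Nat.eqb_eq.
    unfold mkE, vl. rewrite !sn_pair. reflexivity.
Qed.

Definition cons_ok s (O : nat -> nat) M := forall q, q < M -> n2b (itl q s) = true /\ hdn (itl q s) = O q.
Lemma cons_le s O M M' : M' <= M -> cons_ok s O M -> cons_ok s O M'.
Proof. intros H1 H2 q Hq. apply H2. lia. Qed.

Lemma exw (P : nat -> bool) pre w : In w pre -> P w = true -> existsb P pre = true.
Proof. intros. apply existsb_exists. eauto. Qed.

Ltac inz := repeat rewrite in_app_iff; simpl; tauto.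
Ltac pairs := repeat (rewrite fs_pair || rewrite sn_pair).
Ltac okcomp := unfold okl, okg, mkW, mkE, fl, cd, xi, vl; cbv zeta; cbn [encode]; pairs; simpl.

Ltac mem1 := match goal with |- existsb (fun y => y =? ?W) ?pre = true =>
   apply (exw _ pre W); [unfold mkW, mkE in *; inz | apply Nat.eqb_refl] end.
Ltac bsplit := repeat (rewrite ?orb_false_r, ?andb_true_r; apply andb_true_iff; split).

Lemma wf_comp cc : exists l, (forall s, listOK s l) /\ In (mkW (encode cc)) l.
Proof.
  induction cc.
  all: try (match goal with |- exists l, _ /\ In ?w l => exists ([] ++ [w]) end;
            split; [intro s; apply listOK_snoc; [apply listOK_nil|okcomp; reflexivity] | simpl; auto]).
  all: try (destruct IHcc1 as [l1 [H1 I1]]; destruct IHcc2 as [l2 [H2 I2]];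
    match goal with |- exists l, _ /\ In ?w l => exists ((l1 ++ l2) ++ [w]) end; split; [|inz];
    intro s; apply listOK_snoc; [apply listOK_app; auto|];
    okcomp; bsplit; mem1).
  destruct IHcc as [l1 [H1 I1]].
  exists (l1 ++ [mkW (encode (cMu cc))]). split; [|inz].
  intro s; apply listOK_snoc; auto.
  okcomp; bsplit; mem1.
Qed.

Ltac fin := bsplit; try apply Nat.eqb_refl; try reflexivity.

Lemma fin_choice O f x y :
  (forall z, z < y -> exists w, eval O f (pair x z) (S w) /\
     exists l M, (forall s, cons_ok s O M -> listOK s l) /\ In (mkE (encode f) (pair x z) (S w)) l) ->
  exists L M, (forall s, cons_ok s O M -> listOK s L) /\
     forall z, z < y -> exists w, In (mkE (encode f) (pair x z) (S w)) L.
Proof.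
  induction y; intro H.
  - exists [], 0. split. intros; apply listOK_nil. intros; lia.
  - destruct IHy as [L [M [H1 H2]]]. intros; apply H; lia.
    destruct (H y (Nat.lt_succ_diag_r y)) as [w [_ [l [M' [H3 H4]]]]].
    exists (L ++ l), (max M M'). split.
    + intros s Hs. apply listOK_app; [apply H1|apply H3]; (eapply cons_le; [|exact Hs]; lia).
    + intros z Hz. destruct (Nat.eq_dec z y).
      * subst. exists w. inz.
      * destruct (H2 z ltac:(lia)) as [w' Hw']. exists w'. inz.
Qed.

Lemma ev_comp O cc x v : eval O cc x v ->
  exists l M, (forall s, cons_ok s O M -> listOK s l) /\ In (mkE (encode cc) x v) l.
Proof.
  intro H. induction H using ev_ind2.
  all: try (match goal with |- exists l M, _ /\ In ?w l => exists ([] ++ [w]), 0 end;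
            split; [intros s Hs; apply listOK_snoc; [apply listOK_nil|okcomp; fin] | simpl; auto]; fail).
  -
    exists ([] ++ [mkE (encode cOracle) x (O x)]), (S x). split; [|simpl; auto].
    intros s Hs; apply listOK_snoc; [apply listOK_nil|]. destruct (Hs x ltac:(lia)) as [E1 E2].
    okcomp. rewrite E1, E2. fin.
  -
    destruct IHeval1 as [l1 [M1 [H1 I1]]]. destruct IHeval2 as [l2 [M2 [H2 I2]]].
    exists ((l1 ++ l2) ++ [mkE (encode (cPair f g)) x (pair a b)]), (max M1 M2). split; [|inz].
    intros s Hs. apply listOK_snoc. apply listOK_app; [apply H1|apply H2]; (eapply cons_le; [|exact Hs]; lia).
    okcomp. fin; mem1.
  -
    destruct IHeval1 as [l1 [M1 [H1 I1]]]. destruct IHeval2 as [l2 [M2 [H2 I2]]].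
    exists ((l1 ++ l2) ++ [mkE (encode (cComp f g)) x z]), (max M1 M2). split; [|inz].
    intros s Hs. apply listOK_snoc. apply listOK_app; [apply H1|apply H2]; (eapply cons_le; [|exact Hs]; lia).
    okcomp. apply (exw _ _ (mkE (encode g) x y)); [unfold mkE in *; inz|].
    unfold mkE; pairs. fin. mem1.
  -
    destruct IHeval as [l1 [M1 [H1 I1]]]. destruct (wf_comp g) as [lw [Hw Iw]].
    exists ((l1 ++ lw) ++ [mkE (encode (cPrec f g)) (pair x 0) v]), M1. split; [|inz].
    intros s Hs. apply listOK_snoc. apply listOK_app; auto.
    okcomp. fin; mem1.
  -
    destruct IHeval1 as [l1 [M1 [H1 I1]]]. destruct IHeval2 as [l2 [M2 [H2 I2]]].
    exists ((l1 ++ l2) ++ [mkE (encode (cPrec f g)) (pair x (S y)) v]), (max M1 M2). split; [|inz].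
    intros s Hs. apply listOK_snoc. apply listOK_app; [apply H1|apply H2]; (eapply cons_le; [|exact Hs]; lia).
    okcomp. apply (exw _ _ (mkE (encode (cPrec f g)) (pair x y) u)); [unfold mkE in *; cbn [encode] in *; inz|].
    unfold mkE; pairs. fin. mem1.
  -
    match goal with IH : exists l M, _ /\ In (mkE (encode f) (pair x y) 0) l |- _ =>
      destruct IH as [l0 [M0 [Hl0 I0]]] end.
    match goal with Hf : forall z, z < y -> exists w, _ |- _ =>
      destruct (fin_choice O f x y Hf) as [L [M [HL IL]]] end.
    exists ((l0 ++ L) ++ [mkE (encode (cMu f)) x y]), (max M0 M). split; [|inz].
    intros s Hs. apply listOK_snoc. apply listOK_app; [apply Hl0|apply HL]; (eapply cons_le; [|exact Hs]; lia).
    okcomp. fin. mem1. apply allb_spec. intros z Hz. destruct (IL z Hz) as [w Iw].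
    apply (exw _ _ (mkE (encode f) (pair x z) (S w))); [unfold mkE in *; inz|].
    unfold mkE; pairs. fin. rewrite Nat.eqb_refl. reflexivity.
Qed.

Lemma tln_cs l : tln (code_seq l) = code_seq (List.tl l).
Proof. destruct l; simpl; unfold tln; simpl. apply sn0. apply sn_pair. Qed.
Lemma itl_cs q l : itl q (code_seq l) = code_seq (skipn q l).
Proof.
  unfold itl. induction q; [reflexivity|].
  change (Nat.iter (S q) tln (code_seq l)) with (tln (Nat.iter q tln (code_seq l))).
  rewrite IHq, tln_cs, skipn_S_tl. reflexivity.
Qed.
Lemma itl_cs_ok q l : n2b (itl q (code_seq l)) = true <-> q < length l.
Proof.
  rewrite itl_cs. rewrite n2b_true. split.
  - intro H. destruct (lt_dec q (length l)); auto. rewrite skipn_all2 in H by lia. simpl in H. lia.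
  - intro H. destruct (skipn q l) eqn:E; simpl; try lia.
    apply (f_equal (@length nat)) in E. rewrite length_skipn in E. simpl in E. lia.
Qed.
Lemma itl_cs_hd q l : hdn (itl q (code_seq l)) = nth q l 0.
Proof.
  rewrite itl_cs, <- nth_skipn0. destruct (skipn q l); simpl; unfold hdn; simpl.
  apply fs0. apply fs_pair.
Qed.

Lemma restr_len f m : length (restr f m) = m.
Proof. unfold restr. rewrite length_map, length_seq. reflexivity. Qed.
Lemma restr_nth f m q : q < m -> nth q (restr f m) 0 = f q.
Proof.
  intro H. unfold restr. rewrite nth_indep with (d' := f 0) by (rewrite length_map, length_seq; auto).
  rewrite map_nth, seq_nth by auto. reflexivity.
Qed.

Lemma oracle_restr f m : oracle_ok f (code_seq (restr f m)).
Proof.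
  intros x H. apply itl_cs_ok in H. rewrite restr_len in H.
  rewrite itl_cs_hd, restr_nth; auto.
Qed.
Lemma cons_restr f m M : M <= m -> cons_ok (code_seq (restr f m)) f M.
Proof.
  intros H q Hq. rewrite itl_cs_ok, itl_cs_hd, restr_len, restr_nth by lia. split; auto. lia.
Qed.

Lemma cs_ge_len l : length l <= code_seq l.
Proof. induction l; simpl; auto. pose proof (pair_ge_r a (code_seq l)). lia. Qed.
Lemma cs_app_le l t : code_seq l <= code_seq (l ++ t).
Proof.
  induction l; simpl. lia.
  assert (forall a y y', y <= y' -> pair a y <= pair a y').
  { intros. Transparent pair. unfold pair. pose proof (tri_le (a0+y) (a0+y')). lia. Opaque pair. }
  pose proof (H a _ _ IHl). lia.
Qed.

Definition s_ext s1 s2 := forall x, n2b (itl x s1) = true ->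
  n2b (itl x s2) = true /\ hdn (itl x s2) = hdn (itl x s1).

Lemma okg_s mem s1 s2 nd : s_ext s1 s2 -> okg mem s1 nd = true -> okg mem s2 nd = true.
Proof.
  intros He. unfold okg; cbv zeta.
  repeat match goal with |- context [if ?b then _ else _] => destruct b end; auto; intro H.
  repeat rewrite andb_true_iff in *. destruct H as [[H1 H2] H3].
  destruct (He _ H2) as [E1 E2]. rewrite E1, E2. auto.
Qed.

Lemma validb_s s1 s2 e n d : s_ext s1 s2 -> validb s1 e n d = true -> validb s2 e n d = true.
Proof.
  intros He H. unfold validb in *. apply andb_true_iff in H. destruct H as [H1 H2].
  rewrite H2, andb_true_r. rewrite allb_spec in *. intros j Hj. specialize (H1 j Hj).
  rewrite okb_okg in *. eapply okg_s; eauto.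
Qed.

Lemma s_ext_app l t : s_ext (code_seq l) (code_seq (l ++ t)).
Proof.
  intros x H. apply itl_cs_ok in H. rewrite itl_cs_ok, !itl_cs_hd, length_app.
  rewrite app_nth1 by auto. split; auto. lia.
Qed.

Lemma inT_tree e n l t : inTb e n (code_seq (l ++ t)) = true -> inTb e n (code_seq l) = true.
Proof.
  unfold inTb. intros H. apply negb_true_iff in H. apply negb_true_iff.
  destruct (exb _ (S (code_seq l))) eqn:E; auto. rewrite <- H.
  apply exb_spec in E. destruct E as [d [Hd E]]. symmetry. apply exb_spec.
  exists d. split. pose proof (cs_app_le l t). lia.
  eapply validb_s; eauto. apply s_ext_app.
Qed.

Lemma TA G cc e n v : encode cc = e -> eval G cc n v ->
  exists m, inTb e n (code_seq (restr G m)) = false.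
Proof.
  intros He Hev. destruct (ev_comp G cc n v Hev) as [l [M [H1 H2]]].
  set (d := pair (length l) (encL l)). exists (max M d).
  set (s := code_seq (restr G (max M d))).
  assert (Hv : validb s e n d = true).
  { subst s d. eapply valid_complete. apply H1. apply cons_restr. lia. rewrite <- He. exact H2. }
  unfold inTb. apply negb_false_iff. apply exb_spec. exists d. split; auto.
  pose proof (cs_ge_len (restr G (max M d))). rewrite restr_len in H. unfold s. lia.
Qed.

Lemma TB f e n m : inTb e n (code_seq (restr f m)) = false ->
  exists cc v, encode cc = e /\ eval f cc n v.
Proof.
  unfold inTb. intro H. apply negb_false_iff in H. apply exb_spec in H.
  destruct H as [d [_ H]]. eapply valid_sound; eauto. apply oracle_restr.
Qed.

Fixpoint qt (c : code) : pr :=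
  match c with
  | cZero => Pr Z Z | cSucc => Pr (Kn 1) Z | cId => Pr (Kn 2) Z | cFst => Pr (Kn 3) Z
  | cSnd => Pr (Kn 4) Z | cOracle => Pr (Kn 5) Z
  | cPair f g => Pr (Kn 6) (Pr (qt f) (qt g))
  | cComp f g => Pr (Kn 7) (Pr (qt f) (qt g))
  | cPrec f g => Pr (Kn 8) (Pr (qt f) (qt g))
  | cMu f => Pr (Kn 9) (qt f)
  end.
Lemma den_qt O c z : den O (qt c) z = encode c.
Proof. induction c; simpl; rewrite ?den_Kn, ?IHc1, ?IHc2, ?IHc; reflexivity. Qed.

Fixpoint constcode (m : nat) : code :=
  match m with 0 => cZero | S m' => cComp cSucc (constcode m') end.
Lemma eval_const O m x : eval O (constcode m) x m.
Proof. induction m; simpl; [constructor|]. econstructor; eauto. constructor. Qed.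

Definition cencp := Rc (qt cZero) (Pr (Kn 7) (Pr (qt cSucc) (Cm Sn Sn))).
Definition CENC A := Cm cencp (Pr Z A).
Lemma den_CENC O A z : den O (CENC A) z = encode (constcode (den O A z)).
Proof.
  unfold CENC. rewrite den_Cm, den_Pr. unfold cencp. rewrite den_Rc.
  generalize (den O A z). intro m. induction m; cbn [recf]. apply den_qt.
  rewrite den_Pr, den_Kn, den_Pr, den_qt, den_Cm, !den_Sn, !sn_pair.
  simpl encode. rewrite <- IHm. reflexivity.
Qed.

Definition spec (X : code) (a : nat) := cComp X (cPair (constcode a) cId).
Definition SPECP (X : code) (A : pr) := Pr (Kn 7) (Pr (qt X) (Pr (Kn 6) (Pr (CENC A) (qt cId)))).
Lemma den_SPECP O X A z : den O (SPECP X A) z = encode (spec X (den O A z)).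
Proof.
  unfold SPECP. rewrite !den_Pr, !den_Kn, !den_qt, den_CENC. reflexivity.
Qed.
Lemma eval_spec O X a x v : eval O X (pair a x) v -> eval O (spec X a) x v.
Proof. intro H. econstructor; [|exact H]. constructor. apply eval_const. constructor. Qed.
Lemma eval_spec_inv O X a x v : eval O (spec X a) x v -> eval O X (pair a x) v.
Proof.
  intro H. inversion H as [| | | | | | |f g x0 y z Hg Hf| | |]; subst.
  inversion Hg as [| | | | | |f' g' x1 a0 b Ha Hb| | | |]; subst.
  assert (a0 = a) by (eapply eval_det; [exact Ha|apply eval_const]). subst.
  inversion Hb; subst. auto.
Qed.

Lemma eval_pr O p z v : den O p z = v -> eval O (toC p) z v.
Proof. intros <-. apply den_ok. Qed.

Definition tix e n := encode (spec (toC T0) (pair e n)).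
Lemma tix_ok e n s : phi (tix e n) s (b2n (inTb e n s)).
Proof.
  exists (spec (toC T0) (pair e n)). split; auto. apply eval_spec. apply eval_pr. apply den_T0.
Qed.

Definition GG ci := cComp cSucc (cPair (cComp ci (cPair (toC (SPECP (toC T0) (Cm Fs Fs))) (toC (SUB (Cm Sn Fs) (SUCC (Cm Fs Sn)))))) (toC (Cm Sn Sn))).
Definition hC ci := cPrec cZero (GG ci).
Definition Qc ci := cComp (toC T0) (cPair (toC Fs) (cComp (hC ci) (cPair cId (toC Sn)))).
Definition Ge (Gf : nat -> nat) e n j := Gf (pair (tix e n) j).

Lemma h_eval O ci Gf (Hci : forall z, eval O ci z (Gf z)) e n m y : y <= m ->
  eval O (hC ci) (pair (pair (pair e n) m) y) (code_seq (map (Ge Gf e n) (seq (m - y) y))).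
Proof.
  induction y; intro Hy.
  - constructor. constructor.
  - replace (seq (m - S y) (S y)) with ((m - S y) :: seq (m - y) y).
    2:{ simpl. f_equal. f_equal. lia. }
    cbn [map code_seq].
    eapply evPrecS; [apply IHy; lia|].
    unfold GG. eapply evComp; [|constructor].
    constructor.
    + eapply evComp; [|apply Hci]. constructor.
      * apply eval_pr. rewrite den_SPECP. cbn [den]. rewrite !fs_pair. reflexivity.
      * apply eval_pr. rewrite den_SUB, den_SUCC. cbn [den]. repeat (rewrite fs_pair || rewrite sn_pair). reflexivity.
    + apply eval_pr. cbn [den]. rewrite !sn_pair. reflexivity.
Qed.

Lemma Q_eval O ci Gf (Hci : forall z, eval O ci z (Gf z)) e n m :
  eval O (Qc ci) (pair (pair e n) m) (b2n (inTb e n (code_seq (restr (Ge Gf e n) m)))).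
Proof.
  unfold Qc. econstructor; [|apply (eval_pr O T0); apply den_T0].
  constructor.
  - apply (eval_pr O Fs). cbn [den]. apply fs_pair.
  - eapply evComp; [|pose proof (h_eval O ci Gf Hci e n m m (le_n m)) as Hh;
       rewrite Nat.sub_diag in Hh; exact Hh].
    replace (pair (pair (pair e n) m) m) with (pair (pair (pair e n) m) (den O Sn (pair (pair e n) m))).
    constructor; [constructor|]. apply den_ok. cbn [den]. rewrite sn_pair. reflexivity.
Qed.

Lemma least (P : nat -> Prop) (Pd : forall m, P m \/ ~ P m) m : P m ->
  exists y, P y /\ forall z, z < y -> ~ P z.
Proof.
  induction m as [m IH] using (well_founded_induction lt_wf). intro Hm.
  destruct (classic (exists z, z < m /\ P z)) as [[z [Hz Pz]]|Hn].
  - apply (IH z Hz Pz).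
  - exists m. split; auto. intros z Hz Pz. apply Hn. eauto.
Qed.

Lemma U_halt O ci Gf (Hci : forall z, eval O ci z (Gf z)) e n m :
  inTb e n (code_seq (restr (Ge Gf e n) m)) = false -> exists y, eval O (cMu (Qc ci)) (pair e n) y.
Proof.
  intro H.
  destruct (least (fun m => inTb e n (code_seq (restr (Ge Gf e n) m)) = false)
             (fun m => classic _) m H) as [y [Hy Hmin]].
  exists y. constructor.
  - pose proof (Q_eval O ci Gf Hci e n y). rewrite Hy in H0. exact H0.
  - intros z Hz. exists 0. pose proof (Q_eval O ci Gf Hci e n z).
    destruct (inTb e n (code_seq (restr (Ge Gf e n) z))) eqn:E; [exact H0|].
    exfalso. apply (Hmin z Hz E).
Qed.

Lemma U_halt_inv O ci Gf (Hci : forall z, eval O ci z (Gf z)) e n y :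
  eval O (cMu (Qc ci)) (pair e n) y -> inTb e n (code_seq (restr (Ge Gf e n) y)) = false.
Proof.
  intro H. inversion H; subst.
  pose proof (Q_eval O ci Gf Hci e n y) as HQ. pose proof (eval_det _ _ _ _ H1 _ HQ) as HE.
  destruct (inTb _ _ _); simpl in HE; congruence.
Qed.

Theorem mainTheorem4 (D : nat -> bool) :
  loquacious_for_paths D ->
  exists g : nat,
    forall e : nat, exists k : nat,
      phi g e k /\ (forall n : nat, Pi11 e n <-> W D k n).
Proof.
  intros [i [Htot Hpath]].
  destruct (Htot 0 0) as [v0 [ci [Hci_enc _]]].
  assert (Hev : forall z, exists v, eval (chi D) ci z v).
  { intro z. destruct (Htot (fs z) (sn z)) as [v [c [Hc Hv]]]. rewrite fs_sn in Hv.
    assert (c = ci) by (apply encode_inj; congruence). subst c. eauto. }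
  destruct (functional_choice _ Hev) as [Gf HGf].
  exists (encode (toC (SPECP (cMu (Qc ci)) I))).
  intro e. exists (encode (spec (cMu (Qc ci)) e)). split.
  - exists (toC (SPECP (cMu (Qc ci)) I)). split; auto. apply eval_pr. rewrite den_SPECP. reflexivity.
  - intro n. split.
    + intro HP. destruct (HP (Ge Gf e n)) as [v [cc [Hcc Hev']]].
      destruct (TA _ cc e n v Hcc Hev') as [m Hm].
      destruct (U_halt (chi D) ci Gf HGf e n m Hm) as [y Hy].
      exists y, (spec (cMu (Qc ci)) e). split; auto. apply eval_spec. exact Hy.
    + intros [v [c [Hc Hev']]]. apply encode_inj in Hc. subst c. apply eval_spec_inv in Hev'.
      apply (U_halt_inv (chi D) ci Gf HGf) in Hev'.
      intro f. apply NNPP. intro Hnf.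
      set (T := fun s => inTb e n (code_seq s) = true).
      assert (Hti : tree_index (tix e n) T).
      { split.
        - intros s t Hs. apply (inT_tree e n s t Hs).
        - intro s. pose proof (tix_ok e n (code_seq s)) as Ht. split; intro Hs.
          + unfold T in Hs. rewrite Hs in Ht. exact Ht.
          + unfold T in Hs. apply not_true_is_false in Hs. rewrite Hs in Ht. exact Ht. }
      assert (Hill : ill_founded T).
      { exists f. intro m. unfold T. destruct (inTb e n (code_seq (restr f m))) eqn:E; auto.
        exfalso. destruct (TB f e n m E) as [cc [w [H1 H2]]]. apply Hnf. exists w, cc. auto. }
      destruct (Hpath _ _ Hti Hill) as [g' [Hg1 Hg2]].
      assert (Hgg : forall j, g' j = Ge Gf e n j).
      { intro j. destruct (Hg1 j) as [c [Hc Hcj]].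
        assert (c = ci) by (apply encode_inj; congruence). subst c.
        eapply eval_det; [exact Hcj|apply HGf]. }
      specialize (Hg2 v). unfold T in Hg2.
      assert (restr g' v = restr (Ge Gf e n) v) by (unfold restr; apply map_ext; auto).
      rewrite H in Hg2. congruence.
Qed.
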